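(* Let $\mathcal X$ be a finite-dimensional operator system and $\mathcal X_0\subsetneq\mathcal X$ a proper operator subsystem. Then $\mathrm{Ind}_{\mathrm{CP}}(\mathcal X:\mathcal X_0)>1$.
   Context: For an operator system $\mathcal X$ with unit $1$, $\mathrm{CP}(\mathcal X)$ denotes the completely positive maps $\mathcal X\to\mathcal X$ and $\mathrm{CP}_1(\mathcal X)$ the set of $\varphi\in\mathrm{CP}(\mathcal X)$ with $\varphi(\mathbb C1)\subset\mathbb C1$. For an operator subsystem $\mathcal X_0\subset\mathcal X$, $\mathrm{Ind}_{\mathrm{CP}}(\mathcal X:\mathcal X_0)=\inf\{\|\varphi(1)\|:\varphi\in\mathrm{CP}_1(\mathcal X),\ \varphi(\mathcal X)\subset\mathcal X_0,\ \varphi-\mathrm{id}_{\mathcal X}\in\mathrm{CP}(\mathcal X)\}$ ($\infty$ if empty). *)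

(* Defs.v *)
From HB Require Import structures.
From mathcomp Require Import all_boot all_order all_algebra.
From mathcomp Require Import complex.
From mathcomp Require Import all_classical all_reals ereal.
Set Implicit Arguments. Unset Strict Implicit. Unset Printing Implicit Defensive.
Import Order.TTheory GRing.Theory Num.Theory.
Local Open Scope ring_scope.
Local Open Scope classical_set_scope.

(* Abstract (Choi--Effros) operator systems over the complex field R[i],     *)

Section OpSys.
Variable R : realType.
Local Notation C := (R[i]).
Variable V : vectType C.

Definition mx_adj (star : V -> V) n (x : 'M[V]_n) : 'M[V]_n :=
  \matrix_(i, j) star (x j i).

(* the congruence  alpha^* x alpha  for alpha : 'M[C]_(n, m), x : 'M[V]_n *)
Definition mx_congr n m (alpha : 'M[C]_(n, m)) (x : 'M[V]_n) : 'M[V]_m :=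
  \matrix_(i, j) \sum_(k < n) \sum_(l < n) ((alpha k i)^* * alpha l j) *: x k l.

Definition mx_rscale n (r : R) (x : 'M[V]_n) : 'M[V]_n :=
  \matrix_(i, j) ((r%:C)%C *: x i j).

Definition mx_unit n (e : V) : 'M[V]_n :=
  \matrix_(i, j) (if i == j then e else 0).

Unset Implicit Arguments.
Record opsys := OpSys {
  os_star : V -> V;
  os_unit : V;
  os_cone : forall n, set 'M[V]_n;
  os_starD : forall x y, os_star (x + y) = os_star x + os_star y;
  os_starZ : forall (a : C) x, os_star (a *: x) = a^* *: os_star x;
  os_starK : forall x, os_star (os_star x) = x;
  os_unit_sa : os_star os_unit = os_unit;
  os_cone_sa : forall n x, os_cone n x -> mx_adj os_star x = x;
  os_coneD : forall n x y, os_cone n x -> os_cone n y -> os_cone n (x + y);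
  os_coneZ : forall n (r : R) x, 0 <= r -> os_cone n x ->
                os_cone n (mx_rscale r x);
  os_cone_proper : forall n x, os_cone n x -> os_cone n (- x) -> x = 0;
  os_cone_congr : forall n m (alpha : 'M[C]_(n, m)) x,
      os_cone n x -> os_cone m (mx_congr alpha x);
  os_unit_order : forall n x, mx_adj os_star x = x ->
      exists2 r : R, 0 < r & os_cone n (mx_rscale r (mx_unit n os_unit) + x);
  os_unit_arch : forall n x, mx_adj os_star x = x ->
      (forall r : R, 0 < r -> os_cone n (mx_rscale r (mx_unit n os_unit) + x)) ->
      os_cone n x
}.

Set Implicit Arguments.

Variable X : opsys.

Definition os_pos n (x : 'M[V]_n) := os_cone X n x.

Definition ampl (phi : V -> V) n (x : 'M[V]_n) : 'M[V]_n := map_mx phi x.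

Definition is_CP (phi : 'End(V)) :=
  forall n (x : 'M[V]_n), os_pos x -> os_pos (ampl phi x).

Definition is_CP1 (phi : 'End(V)) :=
  is_CP phi /\ exists c : C, phi (os_unit X) = c *: os_unit X.

(* the operator system norm:
   ||x|| = inf { r >= 0 : [[r 1, x], [x^*, r 1]] in M_2(X)^+ } *)
Definition os_block2 (r : R) (x : V) : 'M[V]_2 :=
  \matrix_(i, j)
     (if i == j then (r%:C)%C *: os_unit X
      else if (i : nat) == 0%N then x else os_star X x).

Definition os_norm (x : V) : R :=
  inf [set r : R | 0 <= r /\ os_pos (os_block2 r x)].

(* operator subsystems: self-adjoint subspaces containing the unit
   (with the matrix order inherited from X) *)
Definition is_subsystem (X0 : {vspace V}) :=
  os_unit X \in X0 /\ forall x, x \in X0 -> os_star X x \in X0.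

(* Ind_CP(X : X0), valued in the extended reals (+oo if the set is empty) *)
Definition Ind_CP (X0 : {vspace V}) : \bar R :=
  ereal_inf [set (os_norm (phi (os_unit X)))%:E | phi in
    [set phi : 'End(V) | is_CP1 phi
       /\ (forall x, phi x \in X0)
       /\ is_CP (phi - \1)%VF]].

End OpSys.

(* Main.v *)
Require Import Defs.
From HB Require Import structures.
From mathcomp Require Import all_boot all_order all_algebra.
From mathcomp Require Import complex.
From mathcomp Require Import all_classical all_reals ereal.
From mathcomp Require Import topology normedtype derive.
From mathcomp Require Import ring lra.
Import Order.TTheory GRing.Theory Num.Theory.
Import numFieldNormedType.Exports.
Local Open Scope ring_scope.

Lemma lip_cont (R : realType) (F : R -> R) (k : R) : 0 < k ->
  (forall a b, `|F a - F b| <= k * `|a - b|) -> continuous F.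
Proof.
move=> k0 HF x; apply/cvgrPdist_lt => e e0.
near=> t.
apply: (le_lt_trans (HF x t)).
rewrite -ltr_pdivlMl //.
near: t.
apply/nbhs_ballP; exists (k^-1 * e); first by apply: mulr_gt0; rewrite ?invr_gt0.
by move=> t; rewrite /ball /=.
Unshelve. all: by end_near.
Qed.

Section T.
Variable R : realType.
Local Notation C := (R[i]).
Variable V : vectType C.
Variable X : opsys R V.
Arguments os_star {R V} o.
Arguments os_unit {R V} o.
Arguments os_cone {R V} o n.
Arguments os_starD {R V} o.
Arguments os_starZ {R V} o.
Arguments os_starK {R V} o.
Arguments os_unit_sa {R V} o.
Arguments os_cone_sa {R V o n x}.
Arguments os_coneD {R V o n x y}.
Arguments os_coneZ {R V o n r x}.
Arguments os_cone_proper {R V o n x}.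
Arguments os_cone_congr {R V o n m} alpha {x}.
Arguments os_unit_order {R V o n x}.
Arguments os_unit_arch {R V o n x}.
Local Notation st := (os_star X).
Local Notation e := (os_unit X).
Local Notation "r %:C" := (real_complex_def (Phant R) r) : ring_scope.

Lemma realC (r : R) : (r%:C) \is Num.real.
Proof.
rewrite realE (_ : 0 = (0:R)%:C) // !lecR; case: (lerP 0 r) => h //.
by rewrite orbC ltW.
Qed.

Lemma conjR (r : R) : (r%:C)^* = r%:C.
Proof. exact/conj_Creal/realC. Qed.

Lemma st0 : st 0 = 0.
Proof. by rewrite -(scale0r 0) os_starZ conjC0 !scale0r. Qed.
Lemma stN z : st (- z) = - st z.
Proof. by rewrite -scaleN1r os_starZ conjCN1 scaleN1r. Qed.
Lemma stB z w : st (z - w) = st z - st w.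
Proof. by rewrite os_starD stN. Qed.
Lemma stR (r : R) z : st (r%:C *: z) = r%:C *: st z.
Proof. by rewrite os_starZ conjR. Qed.

Definition m1 (z : V) : 'M[V]_1 := \matrix_(i, j) z.
Definition P z := os_pos X (m1 z).

Lemma PD z w : P z -> P w -> P (z + w).
Proof.
move=> h1 h2; have := os_coneD h1 h2.
by congr os_cone; apply/matrixP => i j; rewrite !mxE.
Qed.

Lemma PZ (r : R) z : 0 <= r -> P z -> P (r%:C *: z).
Proof.
move=> r0 h; have := os_coneZ r0 h.
by congr os_cone; apply/matrixP => i j; rewrite !mxE.
Qed.

Lemma Pprop z : P z -> P (- z) -> z = 0.
Proof.
move=> h1 h2.
have h3 : os_cone X 1 (- m1 z).
  by move: h2; rewrite /P /os_pos; congr os_cone; apply/matrixP => i j; rewrite !mxE.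
have := os_cone_proper h1 h3 => /matrixP /(_ ord0 ord0).
by rewrite !mxE.
Qed.

Lemma Psa z : P z -> st z = z.
Proof.
move=> /os_cone_sa /matrixP /(_ ord0 ord0); by rewrite !mxE.
Qed.

Lemma m1_unit (r : R) z :
  mx_rscale r (mx_unit 1 e) + m1 z = m1 (r%:C *: e + z).
Proof. by apply/matrixP => i j; rewrite !mxE !ord1. Qed.

Lemma Pord z : st z = z -> exists2 r : R, 0 < r & P (r%:C *: e + z).
Proof.
move=> h.
have h1 : mx_adj st (m1 z) = m1 z by apply/matrixP => i j; rewrite !mxE.
have [r r0 hr] := os_unit_order h1.
by exists r => //; rewrite /P /os_pos -m1_unit.
Qed.

Lemma Parch z : st z = z -> (forall r : R, 0 < r -> P (r%:C *: e + z)) -> P z.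
Proof.
move=> h H.
have h1 : mx_adj st (m1 z) = m1 z by apply/matrixP => i j; rewrite !mxE.
apply: (os_unit_arch h1) => r r0; rewrite m1_unit; exact: H.
Qed.


Arguments Pord {z}.
Arguments Parch {z}.
Arguments Psa {z}.
Arguments Pprop {z}.
Arguments PD {z w}.
Arguments PZ {r z}.

Lemma scRA (r s : R) (z : V) : r%:C *: (s%:C *: z) = (r * s)%:C *: z.
Proof. by rewrite scalerA rmorphM. Qed.

Lemma rcN1 : (-1 : R)%:C = -1.
Proof. by rewrite rmorphN rmorph1. Qed.

Lemma Pe : P e.
Proof.
have [r r0 h] := Pord st0; rewrite addr0 in h.
have ri : 0 <= r^-1 by rewrite invr_ge0 ltW.
have := PZ ri h; by rewrite scRA mulVf ?gt_eqF // rmorph1 scale1r.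
Qed.

Lemma Pmono (s t : R) (z : V) : P (s%:C *: e + z) -> s <= t -> P (t%:C *: e + z).
Proof.
move=> h st0; have d0 : 0 <= t - s by rewrite subr_ge0.
have := PD h (PZ d0 Pe).
by rewrite addrAC -scalerDl -rmorphD [s + _]addrC subrK.
Qed.

Arguments Pmono {s t z}.

Lemma e0_triv : e = 0 -> forall v : V, v = 0.
Proof.
move=> he.
have sa0 : forall z, st z = z -> z = 0.
  move=> z hz; apply: Pprop.
    by have [r _] := Pord hz; rewrite he scaler0 add0r.
  have hz' : st (- z) = - z by rewrite stN hz.
  by have [r _] := Pord hz'; rewrite he scaler0 add0r.
have anti : forall v, st v = - v.
  move=> v; apply/eqP; rewrite -addr_eq0; apply/eqP/sa0.
  by rewrite os_starD os_starK addrC.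
move=> v.
have h1 := anti ('i *: v).
rewrite os_starZ conjCi anti scalerN scaleNr opprK in h1.
have : ('i + 'i) *: v = 0 by rewrite scalerDl {1}h1 addNr.
move/eqP; rewrite scaler_eq0 => /orP [|/eqP //].
rewrite -mulr2n -mulr_natr mulf_eq0 => /orP [|]; rewrite ?pnatr_eq0 //.
by move=> /eqP hi; move: (@neq0Ci C); rewrite hi eqxx.
Qed.

Definition B (z : V) (s : R) := P (s%:C *: e + z) /\ P (s%:C *: e - z).

Lemma B_add z w s t : B z s -> B w t -> B (z + w) (s + t).
Proof.
move=> [h1 h2] [h3 h4]; split.
  by have := PD h1 h3; rewrite addrACA -scalerDl -rmorphD.
by have := PD h2 h4; rewrite opprD addrACA -scalerDl -rmorphD.
Qed.

Lemma B_opp z s : B z s -> B (- z) s.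
Proof. by move=> [h1 h2]; split; rewrite ?opprK. Qed.

Lemma B_scale (r : R) z s : B z s -> B (r%:C *: z) (`|r| * s).
Proof.
move=> [h1 h2]; case: (lerP 0 r) => r0.
  rewrite ger0_norm //; split.
    by have := PZ r0 h1; rewrite scalerDr scRA.
  by have := PZ r0 h2; rewrite scalerDr scRA scalerN.
rewrite ltr0_norm //; have r0' : 0 <= - r by rewrite oppr_ge0 ltW.
split.
  by have := PZ r0' h2; rewrite scalerDr scRA scalerN rmorphN scaleNr opprK.
by have := PZ r0' h1; rewrite scalerDr scRA rmorphN scaleNr.
Qed.

Lemma B_mono z s t : B z s -> s <= t -> B z t.
Proof. by move=> [h1 h2] hst; split; apply: Pmono hst. Qed.

Lemma B_sa z s : B z s -> st z = z.
Proof.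
move=> [h1 _]; have := Psa h1; rewrite os_starD stR os_unit_sa.
by move/addrI.
Qed.

Lemma B_ex z : st z = z -> exists s, B z s.
Proof.
move=> hz; have hz' : st (- z) = - z by rewrite stN hz.
have [r1 r10 h1] := Pord hz; have [r2 r20 h2] := Pord hz'.
exists (r1 + r2); split.
  by apply: (Pmono h1); rewrite lerDl ltW.
by apply: (Pmono h2); rewrite lerDr ltW.
Qed.

Lemma B_zero z : st z = z -> (forall s : R, 0 < s -> B z s) -> z = 0.
Proof.
move=> hz H; have hz' : st (- z) = - z by rewrite stN hz.
apply: Pprop.
  by apply: Parch => // r /H [].
by apply: Parch => // r /H [].
Qed.

Hypothesis he : e != 0.

Lemma B_ge0 z s : B z s -> 0 <= s.
Proof.
move=> [h1 h2]; have := PD h1 h2; rewrite addrACA subrr addr0 -scalerDl -rmorphD.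
move=> h; case: (lerP 0 s) => // s0; exfalso.
have s20 : 0 < - (s + s)^-1.
  by rewrite oppr_gt0 invr_lt0 -(addr0 0) ltrD.
have := PZ (ltW s20) h; rewrite scRA mulNr mulVf ?lt_eqF ?ltrD ?(addr0 0) //.
rewrite rmorphN rmorph1 scaleN1r => h3.
  by move/negP: he; apply; apply/eqP/Pprop => //; exact: Pe.
by rewrite -(addr0 0) ltrD.

Qed.


Arguments B_ex {z}.
Arguments B_ge0 {z s}.
Arguments B_add {z w s t}.
Arguments B_opp {z s}.
Arguments B_scale r {z s}.
Arguments B_mono {z s t}.
Arguments B_sa {z s}.
Arguments B_zero {z}.

Fixpoint spanR (s : seq V) (z : V) : Prop :=
  match s with [::] => z = 0 | u :: s' => exists b : R, spanR s' (z - b%:C *: u) end.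

Lemma spanR0 s : spanR s 0.
Proof. elim: s => [//|u s IH] /=; exists 0; by rewrite rmorph0 scale0r subr0. Qed.

Lemma spanRD s y w : spanR s y -> spanR s w -> spanR s (y + w).
Proof.
elim: s y w => [|u s IH] y w /=; first by move=> -> ->; rewrite addr0.
move=> [b hb] [c hc]; exists (b + c).
have := IH _ _ hb hc; congr spanR.
by rewrite rmorphD scalerDl opprD addrACA.
Qed.

Lemma spanRZ s (r : R) y : spanR s y -> spanR s (r%:C *: y).
Proof.
elim: s y => [|u s IH] y /=; first by move=> ->; rewrite scaler0.
move=> [b hb]; exists (r * b).
by have := IH _ hb; rewrite scalerBr scRA.
Qed.

Arguments spanRZ {s} r {y}.
Arguments spanRD {s y w}.

Lemma spanRN s y : spanR s y -> spanR s (- y).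
Proof.
move=> h; have := spanRZ (-1) h; by rewrite rmorphN rmorph1 scaleN1r.
Qed.

Lemma spanR_sa s : (forall u, u \in s -> st u = u) ->
  forall y, spanR s y -> st y = y.
Proof.
elim: s => [|u s IH] Hs y /=; first by move=> ->; exact: st0.
move=> [b hb]; have := IH (fun v hv => Hs v (@mem_behead _ (u :: s) v hv)) _ hb.
rewrite stB stR (Hs u (mem_head _ _)) => /eqP; rewrite subr_eq subrK => /eqP //.
Qed.

Local Open Scope classical_set_scope.

Lemma dist_pos (s : seq V) : (forall u, u \in s -> st u = u) ->
  forall x, st x = x -> ~ spanR s x ->
  exists2 d : R, 0 < d & forall y t, spanR s y -> B (y - x) t -> d <= t.
Proof.
elim: s => [|u s IH] Hs x hx nx.
  apply: contrapT => H; apply: nx.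
  have hB : forall d : R, 0 < d -> B (- x) d.
    move=> d d0; apply: contrapT => nB; apply: H.
    exists d => // y t /= -> hB; rewrite sub0r in hB.
    case: (leP d t) => // tlt; exfalso; apply: nB; exact: B_mono hB (ltW tlt).
  by apply/eqP; rewrite -oppr_eq0; apply/eqP/B_zero => //; rewrite stN hx.
have Hs' : forall v, v \in s -> st v = v by move=> v hv; apply: Hs; exact: (@mem_behead _ (u :: s)).
have hu : st u = u by apply: Hs; exact: mem_head.
case: (pselect (spanR s u)) => su.
  have nx' : ~ spanR s x.
    by move=> h; apply: nx; exists 0; rewrite rmorph0 scale0r subr0.
  have [d d0 Hd] := IH Hs' x hx nx'.
  exists d => // y t [b hb] hB; apply: (Hd y t) => //.
  by have := spanRD hb (spanRZ b su); rewrite subrK.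
have [d1 d10 Hd1] := IH Hs' u hu su.
have [sx Bx] := B_ex hx.
have [su0 Bu] := B_ex hu.
have sx0 := B_ge0 Bx; have su00 := B_ge0 Bu.
pose M := (1 + sx) / d1.
have M0 : 0 <= M by apply: divr_ge0; [apply: addr_ge0 | apply: ltW].
pose S b := [set t | exists2 y, spanR s y & B (y - (x - b%:C *: u)) t].
pose F b := inf (S b).
have saxb : forall b, st (x - b%:C *: u) = x - b%:C *: u.
  by move=> b; rewrite stB stR hu hx.
have Sne : forall b, S b !=set0.
  move=> b; have [t Bt] := B_ex (saxb b); exists t; exists 0; first exact: spanR0.
  by rewrite sub0r; apply: B_opp.
have Slb : forall b, has_lbound (S b).
  by move=> b; exists 0 => t [y _ /B_ge0].
have Flip : forall b b', F b' <= F b + su0 * `|b - b'|.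
  move=> b b'; rewrite -lerBlDr; apply: lb_le_inf => // t [y hy hB].
  rewrite lerBlDr; apply: ge_inf => //; exists y => //.
  have := B_add hB (B_scale (b' - b) Bu).
  rewrite [su0 * _]mulrC distrC; congr B.
  rewrite rmorphB scalerBl !opprB -addrA; congr (y + _).
  by rewrite addrC addrA subrK.
have Fcont : continuous F.
  apply: (@lip_cont _ F (su0 + 1)); first by rewrite ltr_wpDl.
  move=> a b; rewrite ler_norml; apply/andP; split.
    rewrite lerNl opprB lerBlDl; apply: le_trans (Flip a b) _.
    by rewrite lerD2l ler_wpM2r ?lerDl.
  rewrite lerBlDl; apply: le_trans (Flip b a) _.
  by rewrite lerD2l distrC ler_wpM2r ?lerDl.
have Fpos : forall b, 0 < F b.
  move=> b.
  have nb : ~ spanR s (x - b%:C *: u) by move=> h; apply: nx; exists b.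
  have [db db0 Hdb] := IH Hs' _ (saxb b) nb.
  apply: lt_le_trans db0 _; apply: lb_le_inf => // t [y hy hB].
  exact: Hdb hB.
have MM : - M <= M by apply: (le_trans _ M0); rewrite oppr_le0.
have [c cM Hc] := EVT_min MM (continuous_subspaceT Fcont).
exists (Num.min 1 (F c)); first by rewrite lt_min ltr01 Fpos.
move=> y t [b hb] hB.
case: (lerP `|b| M) => bM.
  rewrite ge_min; apply/orP; right.
  apply: le_trans (Hc b _) _; first by rewrite in_itv /= -ler_norml.
  apply: ge_inf => //; exists (y - b%:C *: u) => //.
  by rewrite opprB addrA subrK.
rewrite ge_min; apply/orP; left.
have b0 : b != 0 by rewrite -normr_gt0; apply: le_lt_trans bM.
have hB2 := B_add hB Bx; rewrite subrK in hB2.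
have hB3 := B_scale (- b^-1) hB2.
have ey : (- b^-1)%:C *: y = (- b^-1)%:C *: (y - b%:C *: u) - u.
  by rewrite scalerBr scRA mulNr mulVf // rcN1 scaleN1r opprK addrK.
rewrite ey in hB3.
have := Hd1 _ _ (spanRZ (- b^-1) hb) hB3.
rewrite normrN normfV ler_pdivlMl ?normr_gt0 // => h.
have : d1 * M < d1 * `|b| by rewrite ltr_pM2l.
rewrite /M mulrC divfK ?gt_eqF // => h2.
rewrite mulrC in h; have := lt_le_trans h2 h; rewrite ltrD2r => /ltW //.
Qed.


Local Close Scope classical_set_scope.

Lemma CP_P (phi : 'End(V)) z : is_CP X phi -> P z -> P (phi z).
Proof.
move=> H hz; have := H 1 (m1 z) hz.
by rewrite /P /ampl; congr os_pos; apply/matrixP => i j; rewrite !mxE.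
Qed.

Arguments CP_P {phi z}.

Lemma norm_lb (a : R) : os_norm X (a%:C *: e) >= a.
Proof.
have hae : st (a%:C *: e) = a%:C *: e by rewrite stR os_unit_sa.
apply: lb_le_inf.
  pose N : 'M[V]_2 := \matrix_(i, j) (if i == j then 0 else a%:C *: e).
  have hN : mx_adj st N = N.
    apply/matrixP => i j; rewrite !mxE eq_sym.
    by case: (i == j); rewrite ?st0 ?hae.
  have [r r0 hr] := os_unit_order hN.
  exists r; split; first exact: ltW.
  move: hr; rewrite /os_pos; congr os_cone; apply/matrixP => i j.
  rewrite !mxE; case: (i == j); first by rewrite addr0.
  rewrite scaler0 add0r hae; by case: ((i : nat) == 0%N).
move=> r [r0 hr].
pose al : 'M[C]_(2, 1) := \matrix_(i, j) (if (i : nat) == 0%N then 1 else -1).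
have := os_cone_congr al hr.
have -> : mx_congr al (os_block2 X r (a%:C *: e)) = m1 ((2 * (r - a))%:C *: e).
  apply/matrixP => i j; rewrite !mxE !big_ord_recl !big_ord0 !mxE /=.
  rewrite conjC1 conjCN1 !mulr1 !mul1r mulrNN mulr1 scale1r !scaleN1r hae !addr0.
  rewrite mulr_natl mulr2n rmorphD rmorphB scalerDl scalerBl; congr (_ + _); exact: addrC.
move=> h; case: (lerP a r) => // ra; exfalso.
have k0 : 0 <= (2 * (a - r))^-1 by rewrite invr_ge0 mulr_ge0 // subr_ge0 ltW.
have := PZ k0 h; rewrite scRA -[r - a]opprB !mulrN mulVf ?rcN1 ?scaleN1r.
  by move=> h2; move/negP: he; apply; apply/eqP/Pprop => //; exact: Pe.
by rewrite mulf_neq0 // subr_eq0 gt_eqF.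
Qed.

Lemma spanR_mem s u (r : R) : u \in s -> spanR s (r%:C *: u).
Proof.
elim: s => [//|v s IH]; rewrite inE => /orP [/eqP ->|hu] /=.
  by exists r; rewrite subrr; exact: spanR0.
by exists 0; rewrite rmorph0 scale0r subr0; exact: IH.
Qed.

Lemma spanR_X0 (X0 : {vspace V}) s : (forall u, u \in s -> u \in X0) ->
  forall y, spanR s y -> y \in X0.
Proof.
elim: s => [|u s IH] Hs y /=; first by move=> ->; exact: mem0v.
move=> [b hb]; have := IH (fun v hv => Hs v (@mem_behead _ (u :: s) v hv)) _ hb.
move=> h; rewrite -(subrK (b%:C *: u) y); apply: memvD => //.
by apply: memvZ; apply: Hs; exact: mem_head.
Qed.

Lemma st_sum n (f : 'I_n -> V) : st (\sum_(i < n) f i) = \sum_(i < n) st (f i).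
Proof. exact: (big_morph st (os_starD X) st0). Qed.

Lemma decomp (c : C) (b : V) : c *: b + st (c *: b) =
  (complex.Re c)%:C *: (b + st b) + (complex.Im c)%:C *: ('i *: (b - st b)).
Proof.
rewrite os_starZ.
have hc : c = (complex.Re c)%:C + 'i * (complex.Im c)%:C.
  by rewrite -complexiE; exact: complexE.
have hcc : c^* = (complex.Re c)%:C - 'i * (complex.Im c)%:C.
  by rewrite {1}hc conjC_rect // realC.
rewrite hcc {1}hc.
set p := (complex.Re c)%:C; set q := (complex.Im c)%:C.
rewrite !scalerDl !scalerDr scaleNr scalerN !scalerA [q * 'i]mulrC.
rewrite scalerN scalerA [q * _]mulrC.
by rewrite -!addrA; congr (_ + _); rewrite addrCA.
Qed.

Definition gen (X0 : {vspace V}) : seq V :=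
  map (fun b => b + st b) (vbasis X0) ++ map (fun b => 'i *: (b - st b)) (vbasis X0).

Lemma gen_sa (X0 : {vspace V}) u : u \in gen X0 -> st u = u.
Proof.
rewrite mem_cat => /orP [] /mapP [b _ ->].
  by rewrite os_starD os_starK addrC.
by rewrite os_starZ stB os_starK conjCi scaleNr -scalerN opprB.
Qed.

Lemma gen_X0 (X0 : {vspace V}) : is_subsystem X X0 -> forall u, u \in gen X0 -> u \in X0.
Proof.
move=> [_ hst] u; rewrite mem_cat => /orP [] /mapP [b hb ->];
  have hb' := vbasis_mem hb.
  by apply: memvD => //; exact: hst.
by apply: memvZ; apply: memvB => //; exact: hst.
Qed.

Lemma gen_span (X0 : {vspace V}) y : y \in X0 -> st y = y -> spanR (gen X0) y.
Proof.
move=> hy sy.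
have h2 : spanR (gen X0) (y + st y).
  rewrite {1 2}(coord_vbasis hy) st_sum -big_split /=.
  apply: (big_ind (spanR (gen X0))); [exact: spanR0 | move=> ? ?; exact: spanRD|].
  move=> i _; rewrite decomp; apply: spanRD; apply: spanR_mem;
    rewrite mem_cat; apply/orP; [left|right]; apply: map_f; apply: mem_nth;
    by rewrite size_tuple.
have := spanRZ (2^-1) h2; congr spanR.
have h1 : (2^-1 : R) + 2^-1 = 1 by field.
by rewrite sy scalerDr -scalerDl -rmorphD h1 rmorph1 scale1r.
Qed.

Lemma main_bound (X0 : {vspace V}) : is_subsystem X X0 -> X0 != fullv ->
  (1%:E < Ind_CP X X0)%E.
Proof.
move=> hX0 hpr.
have [v _ vn] : exists2 v, v \in fullv & v \notin X0.
  apply/subvPn; apply: contra hpr => h; by rewrite eqEsubv h subvf.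
have [_ hst] := hX0.
have [x hx xn] : exists2 x, st x = x & x \notin X0.
  case: (boolP (v + st v \in X0)) => h1; last first.
    by exists (v + st v) => //; rewrite os_starD os_starK addrC.
  case: (boolP ('i *: (v - st v) \in X0)) => h2; last first.
    exists ('i *: (v - st v)) => //.
    by rewrite os_starZ stB os_starK conjCi scaleNr -scalerN opprB.
  exfalso; move/negP: vn; apply.
  have : (2^-1 : C) *: (v + st v - 'i *: ('i *: (v - st v))) \in X0.
    by apply: memvZ; apply: memvB => //; apply: memvZ.
  rewrite scalerA -expr2 sqrCi scaleN1r opprK addrACA subrr addr0 scalerDr -scalerDl.
  have -> : (2^-1 + 2^-1 : C) = 1.
    by field.
  by rewrite scale1r.
have nx : ~ spanR (gen X0) x.
  by move=> /(@spanR_X0 X0 _ (@gen_X0 X0 hX0)) h; move/negP: xn.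
have [d d0 Hd] := @dist_pos (gen X0) (@gen_sa X0) x hx nx.
have [rx Bx] := B_ex hx.
have rx0 := B_ge0 Bx.
pose r := rx + 1.
have r0 : 0 < r by rewrite /r ltr_wpDl.
have Bxr : B x r by apply: B_mono Bx _; rewrite /r lerDl.
apply: (@lt_le_trans _ _ (1 + d / r)%:E).
  by rewrite lte_fin ltrDl divr_gt0.
apply: le_ereal_inf_tmp => _ [phi [[hcp [c hc]] [hran hpsi]] <-].
rewrite lee_fin.
pose psi := (phi - \1)%VF.
have psiE : forall z, psi z = phi z - z.
  by move=> z; rewrite /psi add_lfunE opp_lfunE id_lfunE.
have hpe : P (psi e) by apply: CP_P => //; exact: Pe.
have pe : psi e = (c - 1) *: e by rewrite psiE hc scalerBl scale1r.
rewrite pe in hpe.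
have cr : (c - 1)^* = c - 1.
  have := Psa hpe; rewrite os_starZ os_unit_sa => /eqP.
  rewrite -subr_eq0 -scalerBl scaler_eq0 (negbTE he) orbF subr_eq0 => /eqP //.
pose tau := complex.Re (c - 1).
have ctau : c - 1 = tau%:C.
  by rewrite /tau complexRe; apply/esym/Creal_ReP/CrealP.
have hB : B (phi x - x) (r * tau).
  have [h1 h2] := Bxr; split.
    have := CP_P hpsi h1; rewrite linearD linearZ /= pe ctau scRA psiE //.
  have := CP_P hpsi h2; rewrite linearB linearZ /= pe ctau scRA psiE //.
have py : phi x \in X0 := hran x.
have sy : st (phi x) = phi x.
  have := B_sa hB; rewrite stB hx => /eqP; rewrite subr_eq subrK => /eqP //.
have := Hd _ _ (@gen_span X0 _ py sy) hB.
rewrite -ler_pdivrMl // mulrC => hd.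
have -> : phi e = (1 + tau)%:C *: e.
  have e1 : (1 + tau)%:C = 1 + tau%:C by rewrite rmorphD rmorph1.
  by rewrite hc e1 -ctau addrC subrK.
apply: le_trans (norm_lb _); by rewrite lerD2l.
Qed.

End T.

Theorem proposition3p2 (R : realType) (V : vectType (R[i])) (X : opsys R V)
    (X0 : {vspace V}) (hX0 : is_subsystem X X0) (hproper : X0 != fullv) :
  (1%:E < Ind_CP X X0)%E.
Proof.
case: (eqVneq (os_unit _ _ X) 0) => he.
  exfalso; move/negP: hproper; apply.
  rewrite eqEsubv subvf /=; apply/subvP => v _.
  by rewrite (@e0_triv R V X he v) mem0v.
exact: (@main_bound R V X he X0 hX0 hproper).
Qed.
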